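(* Let $G$ be a group and $\mathcal{S}$ a 2-complex with vertices in $G$ such that $\mathcal{C}=Sc[\mathcal{S},G]$ is a commutative triplet structure. Then every edge of $\mathcal{C}$ has exactly two centers.
   Context: $\mathcal{S}(1)$ is the set of 2-sets contained in triangles of $\mathcal{S}$. For $\sigma\subseteq G$, $\sigma\cdot g=\{sg:s\in\sigma\}$; $Sc[\mathcal{S},G]=\{\sigma\cdot g:\sigma\in\mathcal{S},g\in G\}$. $\mathcal{T}=\mathcal{S}(1)$, $\mathcal{T}_o$ = ordered pairs $(t_1,t_2)$ with $\{t_1,t_2\}\in\mathcal{T}$. Commutative triplet structure: (0) $\{s,s^{-1}\}\notin\mathcal{T}$ for every vertex $s$; (A) every edge of $\mathcal{T}$ lies in exactly $\tilde d$ triangles of $\mathcal{S}$; (B) $ab=ba$ for $\{a,b\}\in\mathcal{T}$; (C) $\{a,b\}\in\mathcal{T}\iff\{a^{-1},b^{-1}\}\in\mathcal{T}$; (D) for $t\ne t'\in\mathcal{T}_o$, $t_1t_2^{-1}=t'_1(t'_2)^{-1}$ implies $t'_2=t_1^{-1}$, $t'_1=t_2^{-1}$; (E) the 1-skeleton of $\mathcal{S}$ is connected. For $\tau=\{a,b\}\in\mathcal{T}$ let $E(g,\tau)=\{ag,bg\}$. The edges of $\mathcal{C}$ are the sets $E(g,\tau)$; an element $c\in G$ is a center of an edge $w$ of $\mathcal{C}$ if $w=E(c,\tau)$ for some $\tau\in\mathcal{T}$. *)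

(* Defs.v *)
(* A general (possibly infinite) group is given by explicit
   operations and axioms; a 2-complex S with vertices in G is a ternary
   relation S x y z meaning "{x,y,z} is a triangle of S". *)
From Stdlib Require Import List Relations.
Import ListNotations.

Record group := Group {
  carrier :> Type;
  gmul : carrier -> carrier -> carrier;
  gone : carrier;
  ginv : carrier -> carrier;
  gmulA : forall x y z, gmul x (gmul y z) = gmul (gmul x y) z;
  gmul1l : forall x, gmul gone x = x;
  gmul1r : forall x, gmul x gone = x;
  gmulVl : forall x, gmul (ginv x) x = gone;
  gmulVr : forall x, gmul x (ginv x) = gone
}.

Section Complex.
Variable G : group.

Definition two_complex (S : G -> G -> G -> Prop) : Prop :=
  (forall x y z, S x y z -> x <> y /\ y <> z /\ x <> z) /\
  (forall x y z, S x y z -> S y x z) /\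
  (forall x y z, S x y z -> S x z y).

Definition edgeT (S : G -> G -> G -> Prop) (a b : G) : Prop :=
  a <> b /\ exists z, S a b z.

Definition vertex (S : G -> G -> G -> Prop) (v : G) : Prop :=
  exists y z, S v y z.

(* (0)-(E): S (equivalently Sc[S,G]) is a commutative triplet structure. *)
Definition comm_triplet_structure (S : G -> G -> G -> Prop) : Prop :=
  (* (0) *)
  (forall s, ~ edgeT S s (ginv G s)) /\
  (* (A) every edge of T lies in exactly dt triangles of S
         (triangles containing {a,b} <-> their third vertex z) *)
  (exists dt : nat, forall a b, edgeT S a b ->
      exists l : list G, length l = dt /\ NoDup l /\
        forall z, In z l <-> S a b z) /\
  (* (B) *)
  (forall a b, edgeT S a b -> gmul G a b = gmul G b a) /\
  (* (C) *)
  (forall a b, edgeT S a b <-> edgeT S (ginv G a) (ginv G b)) /\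
  (* (D) for distinct ordered pairs t, t' in T_o *)
  (forall t1 t2 u1 u2, edgeT S t1 t2 -> edgeT S u1 u2 ->
      (t1, t2) <> (u1, u2) ->
      gmul G t1 (ginv G t2) = gmul G u1 (ginv G u2) ->
      u2 = ginv G t1 /\ u1 = ginv G t2) /\
  (forall u v, vertex S u -> vertex S v ->
      clos_refl_trans G (edgeT S) u v).

(* The edge E(g,{a,b}) = {ag, bg} equals the 2-set {x,y}. *)
Definition edge_eq (S : G -> G -> G -> Prop) (g a b x y : G) : Prop :=
  (gmul G a g = x /\ gmul G b g = y) \/ (gmul G a g = y /\ gmul G b g = x).

Definition center (S : G -> G -> G -> Prop) (x y c : G) : Prop :=
  exists a b, edgeT S a b /\ edge_eq S c a b x y.

End Complex.

(* Main.v *)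
Require Import Defs.
From Stdlib Require Import List Relations Classical.

Section GL.
Variable G : group.
Local Notation "x * y" := (gmul G x y).
Local Notation "x ^-1" := (ginv G x) (at level 3).

Lemma lcancel (a x y : G) : a * x = a * y -> x = y.
Proof. intro H. rewrite <- (gmul1l G x), <- (gmul1l G y), <- (gmulVl G a),
  <- !gmulA, H. reflexivity. Qed.

Lemma rcancel (a x y : G) : x * a = y * a -> x = y.
Proof. intro H. rewrite <- (gmul1r G x), <- (gmul1r G y), <- (gmulVr G a),
  !gmulA, H. reflexivity. Qed.

Lemma invinv (a : G) : (a^-1)^-1 = a.
Proof. apply (lcancel (a^-1)). rewrite gmulVr, gmulVl. reflexivity. Qed.
End GL.

Theorem mainTheorem6 (G : group) (S : G -> G -> G -> Prop) :
  two_complex G S ->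
  comm_triplet_structure G S ->
  forall (g a b : G), edgeT G S a b ->
    let x := gmul G a g in
    let y := gmul G b g in
    exists c1 c2 : G, c1 <> c2 /\
      forall c : G, center G S x y c <-> (c = c1 \/ c = c2).
Proof.
  intros [Hd [Hs1 Hs2]] [H0 [_ [HB [HC [HD _]]]]] g a b Hab x y.
  assert (Hsym : forall u v, edgeT G S u v -> edgeT G S v u).
  { intros u v [Huv [z Hz]]. split; [congruence | exists z; auto]. }
  exists g, (gmul G (gmul G a b) g). split.
  - intro E. apply (H0 a).
    replace (ginv G a) with b; [exact Hab|].
    apply (lcancel G a). rewrite gmulVr.
    apply (rcancel G g). rewrite gmul1l. symmetry. exact E.
  - intro c. split.
    + intros [a' [b' [Hab' Heq]]].
      assert (K : forall a' b', edgeT G S a' b' -> gmul G a' c = x -> gmul G b' c = y ->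
                 c = g \/ c = gmul G (gmul G a b) g).
      { clear a' b' Hab' Heq. intros a' b' Hab' E1 E2. subst x y.
        destruct (classic (c = g)) as [Hc|Hc]; [left; exact Hc|right].
        assert (Ec : c = gmul G (gmul G (ginv G a') a) g).
        { rewrite <- gmulA, <- E1, gmulA, gmulVl, gmul1l. reflexivity. }
        assert (E3 : gmul G b' (ginv G a') = gmul G b (ginv G a)).
        { rewrite Ec in E2. apply (rcancel G a). rewrite <- (gmulA G b (ginv G a)), gmulVl, gmul1r.
          apply (rcancel G g). rewrite <- E2. rewrite !gmulA. reflexivity. }
        destruct (HD b a b' a' (Hsym _ _ Hab) (Hsym _ _ Hab')) as [F1 F2].
        { intro P. injection P. intros E4 E5. subst;  apply Hc. eapply lcancel; exact E1. }
        { symmetry. exact E3. }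
        rewrite Ec, F1, invinv, (HB a b Hab). reflexivity. }
      destruct Heq as [[E1 E2]|[E1 E2]].
      * apply (K a' b'); auto.
      * apply (K b' a'); auto.
    + intros [->| ->].
      * exists a, b. split; [exact Hab|]. left; split; reflexivity.
      * exists (ginv G b), (ginv G a). split.
        { apply Hsym. apply HC. rewrite !invinv. exact Hab. }
        left. subst x y. split.
        { rewrite (HB a b Hab), !gmulA, gmulVl, gmul1l. reflexivity. }
        { rewrite !gmulA, gmulVl, gmul1l. reflexivity. }
Qed.
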